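(* Let $d\ge 2$ be an integer. Let $(\mathrm{CD}_d,H_d)$ be a combinatorial description of $\mathcal{W}_d$ which is compatible with $\mathrm{RT}$ via equivariant surjections $p_n:\mathrm{RT}(n)\to\mathrm{CD}_d(n)$. Then every $p_n$ is a bijection; that is, the only combinatorial description of $\mathcal{W}_d$ compatible with $\mathrm{RT}$ is $\mathrm{RT}$ itself (with $H_d$ corresponding to $F$).
   Context: A rooted tree on a finite vertex set $V\subset\mathbb{N}$ is a set $E$ of ordered pairs of elements of $V$ (an edge $(v,w)$ means $w$ is a child of $v$) such that exactly one vertex $r$ (the root) has no parent, every other vertex has exactly one parent, and every vertex is connected to the root by following parents. For $v\in V$, $\tau_v$ is the subtree of $v$ and all its descendants. $\mathrm{RT}(n)$ is the set of rooted trees on $[n]=\{1,\dots,n\}$; $\mathfrak{S}_n$ acts on $\mathrm{RT}(n)$ by relabelling vertices. Let $\mathcal{C}_d=C^\infty(\mathbb{R}^d,\mathbb{R}^d)$, $g_j$ the $j$-th coordinate, $\partial_j=\partial/\partial x_j$. For $\tau$ with root $r$ whose children are $v_1,\dots,v_k$, define recursively the $n$-linear map $F(\tau)((f^i)_{i\in V})=\sum_{j_1,\dots,j_k=1}^d F(\tau_{v_1})((f^i)_{i\in V(\tau_{v_1})})_{j_1}\cdots F(\tau_{v_k})((f^i)_{i\in V(\tau_{v_k})})_{j_k}\,\partial_{j_1}\cdots\partial_{j_k}f^r$ (for a single vertex $F(\tau)=f^r$). $\mathcal{W}_d(n)$ is the real vector space spanned by $\{F(\tau):\tau\in\mathrm{RT}(n)\}$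 inside the $n$-linear maps $\mathcal{C}_d^n\to\mathcal{C}_d$; $\mathfrak{S}_n$ acts on it by permuting the $n$ inputs, and $F$ is $\mathfrak{S}_n$-equivariant. A combinatorial description of $\mathcal{W}_d$ is a pair $(\mathrm{CD}_d,H_d)$ where $\mathrm{CD}_d=(\mathrm{CD}_d(n))_{n}$ is a sequence of sets, $\mathrm{CD}_d(n)$ carrying an action of $\mathfrak{S}_n$, and $H_d^n:\mathrm{CD}_d(n)\to\mathcal{W}_d(n)$ are $\mathfrak{S}_n$-equivariant maps whose images span $\mathcal{W}_d(n)$. It is compatible with $\mathrm{RT}$ if there are $\mathfrak{S}_n$-equivariant surjections $p_n:\mathrm{RT}(n)\to\mathrm{CD}_d(n)$ with $F(\tau)=H^n_d(p_n(\tau))$ for all $\tau\in\mathrm{RT}(n)$. *)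

(* Defs.v *)
From HB Require Import structures.
From mathcomp Require Import all_boot all_order all_algebra all_fingroup.
From mathcomp Require Import all_classical all_reals all_analysis.
Set Implicit Arguments. Unset Strict Implicit. Unset Printing Implicit Defensive.
Import Order.TTheory GRing.Theory Num.Theory.
Import numFieldNormedType.Exports.
Local Open Scope ring_scope.

Section Defs.
Variables (R : realType) (d : nat).

(* Points of R^d are row vectors 'rV[R]_d; x 0 j is the j-th coordinate. *)
Definition evec (j : 'I_d) : 'rV[R]_d := delta_mx 0 j.

Definition partial (j : 'I_d) (g : 'rV[R]_d -> 'rV[R]_d) : 'rV[R]_d -> 'rV[R]_d :=
  fun x => 'D_(evec j) g x.

Definition iter_partial (s : seq 'I_d) (g : 'rV[R]_d -> 'rV[R]_d) :=
  foldr partial g s.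

Definition smooth (g : 'rV[R]_d -> 'rV[R]_d) : Prop :=
  forall s : seq 'I_d, continuous (iter_partial s g) /\
    (forall (j : 'I_d) (x : 'rV[R]_d), derivable (iter_partial s g) x (evec j)).

Definition Cd := {g : 'rV[R]_d -> 'rV[R]_d | smooth g}.

Definition nmap (n : nat) := ('I_n -> Cd) -> 'rV[R]_d -> 'rV[R]_d.

End Defs.

(* An edge (v, w) means w is a child of v. *)
Definition parents n (E : {set 'I_n * 'I_n}) (w : 'I_n) : {set 'I_n} :=
  [set v | (v, w) \in E].
Definition children n (E : {set 'I_n * 'I_n}) (v : 'I_n) : {set 'I_n} :=
  [set w | (v, w) \in E].

Definition is_rtree n (E : {set 'I_n * 'I_n}) : bool :=
  [exists r : 'I_n,
     [forall v : 'I_n, #|parents E v| == (v != r)] &&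
     [forall v : 'I_n, connect (fun a b => (a, b) \in E) r v]].

Definition RT (n : nat) := {E : {set 'I_n * 'I_n} | is_rtree E}.

Definition relabel n (s : {perm 'I_n}) (E : {set 'I_n * 'I_n}) : {set 'I_n * 'I_n} :=
  [set (s e.1, s e.2) | e in E].

Definition root_of n (E : {set 'I_n * 'I_n}) : option 'I_n :=
  [pick r | #|parents E r| == 0%N].

Section Elementary.
Variables (R : realType) (d : nat).

(* F(tau_v)((f^i)_{i in V(tau_v)}), computed by recursion on the subtree of v
   (k is fuel, at least the height of the subtree plus one):
   F(tau_v) = sum_{j_1..j_k} F(tau_{v_1})_{j_1} ... F(tau_{v_k})_{j_k} d_{j_1}...d_{j_k} f^v,
   where v_1, ..., v_k are the children of v. *)
Fixpoint Fsub n (E : {set 'I_n * 'I_n}) (f : 'I_n -> Cd R d) (k : nat) (v : 'I_n)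
  : 'rV[R]_d -> 'rV[R]_d :=
  match k with
  | 0 => fun _ => 0
  | k'.+1 => fun x =>
      let cs := enum (children E v) in
      \sum_(J : (size cs).-tuple 'I_d)
         (\prod_(i < size cs) (Fsub E f k' (nth v cs i) x) 0 (tnth J i))
           *: iter_partial (val J) (proj1_sig (f v)) x
  end.

Definition F n (t : RT n) : nmap R d n :=
  fun f x => match root_of (val t) with
             | Some r => Fsub (val t) f n r x
             | None => 0
             end.

Definition in_W n (Phi : nmap R d n) : Prop :=
  exists a : RT n -> R, Phi = fun f x => \sum_(t : RT n) a t *: F t f x.

Definition permact n (s : {perm 'I_n}) (Phi : nmap R d n) : nmap R d n :=
  fun f => Phi (f \o s).

End Elementary.

(* Main.v *)
Require Import Defs.
From HB Require Import structures.
From mathcomp Require Import all_boot all_order all_algebra all_fingroup.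
From mathcomp Require Import all_classical all_reals all_analysis.
From mathcomp Require Import ring.
Set Implicit Arguments. Unset Strict Implicit. Unset Printing Implicit Defensive.
Import Order.TTheory GRing.Theory Num.Theory.
Import numFieldNormedType.Exports.
Local Open Scope ring_scope.

Section Mono.
Variables (R : realType) (d : nat) (i0 i1 : 'I_d).

Lemma is_derive_coord (x v : 'rV[R]_d) (j : 'I_d) :
  is_derive x v (fun N : 'rV[R]_d => N 0 j) (v 0 j).
Proof.
have @f : {linear 'rV[R]_d -> R}.
  by exists (fun N : 'M[R]_(_, _) => N 0 j); do 2![eexists]; do ?[constructor];
     rewrite ?mxE// => ? *; rewrite ?mxE//; move=> ?; rewrite !mxE.
have -> : (fun N : 'rV[R]_d => N 0 j) = f by [].
have fc : continuous f by exact: coord_continuous.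
apply: DeriveDef; first exact/diff_derivable/linear_differentiable.
by rewrite deriveE ?diff_lin //; exact: linear_differentiable.
Qed.

Definition mono (c : R) (a b : nat) (x : 'rV[R]_d) : R :=
  c * ((x 0 i0) ^+ a * (x 0 i1) ^+ b).

Lemma is_derive_mono c a b x v :
  is_derive x v (mono c a b)
   (mono (c * a%:R) a.-1 b x * v 0 i0 + mono (c * b%:R) a b.-1 x * v 0 i1).
Proof.
have h1 := is_derive_coord x v i0.
have h2 := is_derive_coord x v i1.
have -> : mono c a b = c \*: ((fun N : 'rV[R]_d => N 0 i0) ^+ a * (fun N : 'rV[R]_d => N 0 i1) ^+ b).
  by apply/funext => y; rewrite /mono /= !exprfctE.
apply: is_derive_eq.
have eX : forall (f : 'rV[R]_d -> R) n y, (f ^+ n) y = f y ^+ n.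
  by move=> f; elim=> [|n IH] y //=; rewrite !exprS -IH.
rewrite /mono /= !eX.
rewrite /GRing.scale /=.

ring.
Qed.

Lemma continuous_mono c a b : continuous (mono c a b).
Proof.
have cX : forall (j : 'I_d) n, continuous (fun N : 'rV[R]_d => (N 0 j) ^+ n).
  move=> j; elim=> [|n IH].
    by move=> y; under eq_fun do rewrite expr0; exact: cst_continuous.
  move=> y.
  have := @continuousM R _ (fun N : 'rV[R]_d => N 0 j) (fun N : 'rV[R]_d => (N 0 j) ^+ n) y
    (@coord_continuous R 1 d 0 j y) (IH y).
  have E : (fun N : 'rV[R]_d => N 0 j ^+ n.+1) =
     (fun N : 'rV[R]_d => N 0 j) \* (fun N : 'rV[R]_d => N 0 j ^+ n).
    by apply/funext => z; rewrite /= exprS.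
  by rewrite E.
move=> y.
have := @continuousM R _ (cst c) (fun N : 'rV[R]_d => N 0 i0 ^+ a * N 0 i1 ^+ b) y
   (@cst_continuous _ _ c y) (@continuousM R _ _ _ y (cX i0 a y) (cX i1 b y)).
by [].
Qed.

Definition fld c a b (e : 'rV[R]_d) (x : 'rV[R]_d) : 'rV[R]_d := mono c a b x *: e.

Lemma fld_entry c a b e i j : (fun x => fld c a b e x i j) = mono (c * e i j) a b.
Proof. by apply/funext => x; rewrite /fld /mono !mxE; ring. Qed.

Lemma derivable_fld c a b e x v : derivable (fld c a b e) x v.
Proof.
apply/derivable_mxP => i j; rewrite fld_entry.
exact: (@ex_derive _ _ _ _ _ _ _ (is_derive_mono _ _ _ x v)).
Qed.

Lemma derive_fld c a b e x v : 'D_v (fld c a b e) x =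
  (mono (c * a%:R) a.-1 b x * v 0 i0 + mono (c * b%:R) a b.-1 x * v 0 i1) *: e.
Proof.
rewrite derive_mx; last exact: derivable_fld.
apply/matrixP => i j; rewrite !mxE fld_entry.
rewrite (@derive_val _ _ _ _ _ _ _ (is_derive_mono _ _ _ x v)) /mono; ring.
Qed.

Hypothesis hi : i0 != i1.

Definition step (j : 'I_d) (p : R * nat * nat) : R * nat * nat :=
  if j == i0 then (p.1.1 * p.1.2%:R, p.1.2.-1, p.2)
  else if j == i1 then (p.1.1 * p.2%:R, p.1.2, p.2.-1)
  else (0, p.1.2, p.2).

Definition fldp (p : R * nat * nat) e := fld p.1.1 p.1.2 p.2 e.

Lemma partial_fldp j p e : partial j (fldp p e) = fldp (step j p) e.
Proof.
apply/funext => x; rewrite /partial derive_fld /fldp /step /fld /evec !mxE /=.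
case: p => [[c a] b] /=.
have [->|h0] := eqVneq j i0.
  by rewrite eq_sym (negbTE hi) /= mulr1 mulr0 addr0.
case: (eqVneq j i1) => [E|h1]; first subst j.
  by rewrite /= mulr1 mulr0 add0r.
by rewrite /= !mulr0 addr0 /mono !mul0r.
Qed.

Lemma iter_partial_fldp s p e :
  iter_partial s (fldp p e) = fldp (foldr step p s) e.
Proof.
by elim: s => [|j s IH] //=; rewrite /iter_partial /= -/(iter_partial s _) IH partial_fldp.
Qed.

Lemma smooth_fldp p e : smooth (fldp p e).
Proof.
move=> s; rewrite iter_partial_fldp; split.
  move=> x; apply: continuousZr_tmp; exact: continuous_mono.
by move=> j x; exact: derivable_fld.
Qed.

Lemma foldr_step s c a b : all (fun j => (j == i0) || (j == i1)) s ->
  [/\ (foldr step (c, a, b) s).1.2 = (a - count_mem i0 s)%N,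
      (foldr step (c, a, b) s).2 = (b - count_mem i1 s)%N &
     (c != 0 -> (count_mem i0 s <= a)%N -> (count_mem i1 s <= b)%N ->
        (foldr step (c, a, b) s).1.1 != 0)].
Proof.
elim: s => [|j s IH] /=.
  by move=> _; rewrite !subn0; split.
case/andP => hj /IH [h1 h2 h3].
move: (foldr step (c, a, b) s) h1 h2 h3 => [[c' a'] b'] /= h1 h2 h3.
rewrite /step /=.
case: (eqVneq j i0) => [->|n0].
  rewrite (negbTE hi) /= add0n add1n; split.
  - by rewrite h1 subnS.
  - by rewrite h2.
  move=> hc ha hb; rewrite mulf_neq0 //.
    by apply: h3 => //; apply: ltnW.
  by rewrite pnatr_eq0 h1 -lt0n subn_gt0.
rewrite (negbTE n0) orFb in hj; rewrite (eqP hj) eqxx /= add0n add1n; split.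
- by rewrite h1.
- by rewrite h2 subnS.
move=> hc ha hb; rewrite mulf_neq0 //.
  by apply: h3 => //; apply: ltnW.
by rewrite pnatr_eq0 h2 -lt0n subn_gt0.
Qed.
End Mono.
Section Tree.
Variables (n : nat) (E : {set 'I_n * 'I_n}) (r : 'I_n).
Hypothesis hpar : forall v, #|parents E v| = (v != r).
Hypothesis hcon : forall v, connect (fun a b => (a, b) \in E) r v.
Local Notation e := (fun a b : 'I_n => (a, b) \in E).

Lemma par_uniq x z y : (x, y) \in E -> (z, y) \in E -> x = z.
Proof.
move=> hx hz.
have : (#|parents E y| <= 1)%N by rewrite hpar leq_b1.
move/card_le1_eqP => H; symmetry; apply: H; by rewrite inE.
Qed.

Lemma no_par_root x : (x, r) \notin E.
Proof.
apply/negP => h.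
have hx : x \in parents E r by rewrite inE.
have : (0 < #|parents E r|)%N by apply/card_gt0P; exists x.
by rewrite hpar eqxx.
Qed.

Lemma connect_last x y : connect e x y -> y != x -> exists z, e z y /\ connect e x z.
Proof.
move/connectP => [p hp hl].
case/lastP: p hp hl => [|p' z] hp hl.
  by rewrite hl /= eqxx.
rewrite last_rcons in hl; subst z => _.
rewrite rcons_path in hp; case/andP: hp => hp' he.
exists (last x p'); split => //; apply/connectP; exists p' => //.
Qed.

Lemma connect_first x y : connect e x y -> y != x -> exists c, e x c /\ connect e c y.
Proof.
move/connectP => [[|c p] hp hl].
  by rewrite hl /= eqxx.
move=> _; case/andP: hp => hc hp.
exists c; split => //; apply/connectP; exists p => //.
Qed.

Lemma acyc v c : (v, c) \in E -> ~~ connect e c v.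
Proof.
move=> hvc; apply/negP => hcv.
set A := [set x | connect e c x].
have clos : forall x y, (x, y) \in E -> y \in A -> x \in A.
  move=> x y hxy; rewrite !inE => hy.
  case: (eqVneq y c) => [Eyc|nyc].
    by subst y; rewrite (par_uniq hxy hvc).
  have [z [hz hcz]] := connect_last hy nyc.
  by rewrite (par_uniq hxy hz).
have back : forall p x, path e x p -> last x p \in A -> x \in A.
  elim=> [|y p IH] x //= /andP [hxy hp] hl.
  exact: clos hxy (IH _ hp hl).
have rA : r \in A.
  have /connectP [p hp hl] := hcon c.
  apply: (back p) => //; rewrite -hl inE; exact: connect0.
rewrite inE in rA.
case: (eqVneq r c) => [Erc|nrc].
  by subst c; rewrite (negbTE (no_par_root v)) in hvc.
have [z [hz _]] := connect_last rA nrc.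
by rewrite (negbTE (no_par_root z)) in hz.
Qed.

Definition Desc v := [set x | connect e v x].

Lemma Sub_lt v c : (v, c) \in E -> (#|Desc c| < #|Desc v|)%N.
Proof.
move=> h; apply: proper_card; apply/properP; split.
  apply/fintype.subsetP => x; rewrite !inE => hx.
  by apply: connect_trans hx; apply: connect1.
by exists v; rewrite !inE ?connect0 // (acyc h).
Qed.
End Tree.

Section Eval.
Variables (R : realType) (d : nat) (i0 i1 : 'I_d) (n : nat) (E : {set 'I_n * 'I_n}).
Variables (D : 'I_n -> 'I_d) (P : 'I_n -> R * nat * nat) (f : 'I_n -> Cd R d).
Hypothesis hi : i0 != i1.
Hypothesis hf : forall v, proj1_sig (f v) = fldp i0 i1 (P v) (evec R (D v)).

Definition coef k v := Fsub E f k v 0 0 (D v).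
Definition val0 (q : R * nat * nat) := mono i0 i1 q.1.1 q.1.2 q.2 0.

Lemma evec_entry (j j' : 'I_d) : evec R j 0 j' = (j' == j)%:R.
Proof. by rewrite /evec mxE eqxx. Qed.

Lemma Fsub_shape k v x : Fsub E f k v x = (Fsub E f k v x 0 (D v)) *: evec R (D v).
Proof.
suff [X ->] : exists X, Fsub E f k v x = X *: evec R (D v).
  by rewrite mxE evec_entry eqxx mulr1.
case: k => [|k] /=; first by exists 0; rewrite scale0r.
rewrite hf; eexists.
under eq_bigr do rewrite (iter_partial_fldp hi) /fldp /fld scalerA.
by rewrite -scaler_suml.
Qed.


Lemma Fsub_val k v : Fsub E f k.+1 v 0 =
  ((\prod_(c <- enum (children E v)) coef k c) *
     val0 (foldr (step i0 i1) (P v) (map D (enum (children E v))))) *: evec R (D v).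
Proof.
rewrite /=; set cs := enum (children E v).
pose Js := map_tuple D (in_tuple cs).
rewrite (bigD1 Js) //= [X in _ + X]big1 ?addr0.
  rewrite hf (iter_partial_fldp hi) /fldp /fld scalerA.
  rewrite /val0; congr ((_ * _) *: _).
  rewrite (big_nth v) big_mkord; apply: eq_bigr => i _.
  by rewrite /coef /Js tnth_map (tnth_nth v).
move=> J nJ.
have [i hi'] : exists i, tnth J i != tnth Js i.
  apply/existsP; apply: contraR nJ => /existsPn h.
  by apply/eqP/eq_from_tnth => i; apply/eqP; move: (h i); rewrite negbK.
rewrite (bigD1 i) //= (Fsub_shape k) mxE evec_entry.
move: hi'; rewrite /Js tnth_map (tnth_nth v) /= => /negbTE ->.
by rewrite mulr0 mul0r scale0r.
Qed.
End Eval.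

Section Main.
Variables (R : realType) (d : nat) (i0 i1 : 'I_d) (hi : i0 != i1) (n : nat).

Lemma rtree_root (E : {set 'I_n * 'I_n}) : is_rtree E ->
  exists r, [/\ forall v, #|parents E v| = (v != r),
    forall v, connect (fun a b => (a, b) \in E) r v & root_of E = Some r].
Proof.
case/existsP => r /andP [/forallP hp /forallP hc].
have hp' : forall v, #|parents E v| = (v != r) by move=> v; apply/eqP.
exists r; split => //.
rewrite /root_of; case: pickP => [r' hr'|hn].
  by rewrite hp' in hr'; congr Some; apply/eqP; move: hr'; case: (r' == r).
by move: (hn r); rewrite hp' eqxx.
Qed.

Variables (E : {set 'I_n * 'I_n}) (u w : 'I_n).

Definition Dw (v : 'I_n) : 'I_d := if v == w then i1 else i0.
Definition Pw (v : 'I_n) : R * nat * nat :=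
  (1, (#|children E v| - (v == u))%N, nat_of_bool (v == u)).
Definition fw (v : 'I_n) : Cd R d :=
  exist _ (fldp i0 i1 (Pw v) (evec R (Dw v))) (smooth_fldp hi _ _).

Lemma Dw_all (s : seq 'I_n) : all (fun j => (j == i0) || (j == i1)) (map Dw s).
Proof. by apply/allP => j /mapP [c _ ->]; rewrite /Dw; case: (c == w); rewrite eqxx ?orbT. Qed.

Lemma cnt1 (E' : {set 'I_n * 'I_n}) v :
  count_mem i1 (map Dw (enum (children E' v))) = ((v, w) \in E').
Proof.
rewrite count_map.
rewrite (eq_count (a2 := pred1 w)); last first.
  by move=> c; rewrite /= /Dw; case: (eqVneq c w) => //= _; rewrite ?eqxx ?(negbTE hi).
by rewrite count_uniq_mem ?enum_uniq // mem_enum inE.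
Qed.

Lemma cnt0 (E' : {set 'I_n * 'I_n}) v :
  count_mem i0 (map Dw (enum (children E' v))) =
  (#|children E' v| - ((v, w) \in E'))%N.
Proof.
rewrite -cnt1 cardE -(size_map Dw) -(count_predC (pred1 i1) (map Dw _)) addKn.
apply: eq_in_count => j /mapP [c _ ->].
rewrite /= /Dw; case: (c == w); rewrite ?eqxx //=.
by rewrite eq_sym (negbTE hi).
Qed.


Lemma val0E (q : R * nat * nat) : val0 i0 i1 q = q.1.1 * ((0 : R) ^+ q.1.2 * 0 ^+ q.2).
Proof. by rewrite /val0 /mono !mxE. Qed.

Section Pos.
Variable r : 'I_n.
Hypothesis hpar : forall v, #|parents E v| = (v != r).
Hypothesis hcon : forall v, connect (fun a b => (a, b) \in E) r v.
Hypothesis huw : (u, w) \in E.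

Lemma edge_w v : ((v, w) \in E) = (v == u).
Proof.
apply/idP/eqP => [h|->] //; exact: (par_uniq hpar h huw).
Qed.

Lemma coef_nz k v : (#|Desc E v| <= k)%N -> coef E Dw fw k v != 0.
Proof.
elim: k v => [|k IH] v hk.
  have : v \in Desc E v by rewrite inE connect0.
  move=> hv; have h0 : (0 < #|Desc E v|)%N by apply/card_gt0P; exists v.
  by have := leq_trans h0 hk.
rewrite /coef (Fsub_val E (D := Dw) (P := Pw) (f := fw) hi (fun v => erefl)) mxE evec_entry eqxx mulr1.
rewrite mulf_neq0 //.
  rewrite prodf_seq_neq0; apply/allP => c; rewrite mem_enum inE => hc.
  have h := Sub_lt hpar hcon hc.
  have hk' : (#|Desc E c| <= k)%N by rewrite -ltnS (leq_trans h hk).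
  by rewrite /=; exact: (IH c hk').
have HH := @foldr_step R d i0 i1 hi (map Dw (enum (children E v))) 1
   (#|children E v| - (v == u)) (v == u) (Dw_all (enum (children E v))).
case: HH => h1 h2 h3.
rewrite val0E /Pw h1 h2 cnt0 cnt1 edge_w !subnn !expr0 !mulr1.
by apply: h3; rewrite ?oner_neq0 ?cnt0 ?cnt1 ?edge_w.
Qed.
End Pos.

Lemma Fsub_zero (E' : {set 'I_n * 'I_n}) k v : (u, w) \notin E' ->
  connect (fun a b => (a, b) \in E') v u -> Fsub E' fw k v 0 = 0.
Proof.
move=> huw'; elim: k v => [|k IH] v hc //=.
rewrite -/(Fsub E' fw k.+1 v 0).
rewrite (Fsub_val E' (D := Dw) (P := Pw) (f := fw) hi (fun v => erefl)).
case: (eqVneq v u) => [Evu|nvu].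
  subst v.
  have HH := @foldr_step R d i0 i1 hi (map Dw (enum (children E' u))) 1
   (#|children E u| - (u == u)) (u == u) (Dw_all (enum (children E' u))).
  case: HH => h1 h2 h3.
  rewrite val0E /Pw h2 cnt1 (negbTE huw') subn0 eqxx expr1.
  by rewrite !mulr0 scale0r.
have nuv : u != v by rewrite eq_sym.
have [c [hvc hcu]] := connect_first hc nuv.
rewrite (big_rem c) ?mem_enum ?inE //= /coef IH //.
by rewrite mxE !mul0r scale0r.
Qed.

End Main.

Section Final.
Variables (R : realType) (d : nat) (i0 i1 : 'I_d) (hi : i0 != i1) (n : nat).

Lemma key (t t' : RT n) u w : (u, w) \in val t -> (u, w) \notin val t' ->
  F (R := R) (d := d) t <> F t'.
Proof.
move=> h h' EF.
have [r [hp hc hroot]] := rtree_root (valP t).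
have [r' [hp' hc' hroot']] := rtree_root (valP t').
have := congr1 (fun G => G (fw R hi (val t) u w) 0) EF.
rewrite /F hroot hroot' /=.
rewrite (@Fsub_zero R d i0 i1 hi n (val t) u w (val t') n r' h' (hc' u)).
rewrite (Fsub_shape (val t) (D := Dw i0 i1 w) (P := Pw R (val t) u) (f := fw R hi (val t) u w) hi (fun v => erefl)).
move/(congr1 (fun M : 'rV[R]_d => M 0 (Dw i0 i1 w r))); rewrite mxE evec_entry eqxx mulr1 mxE.
apply/eqP; apply: (coef_nz R hi hp hc h).
by rewrite (leq_trans (max_card _)) // card_ord.
Qed.
End Final.

Unset Implicit Arguments.
Theorem theorem3p1 (R : realType) (d : nat) (hd : (2 <= d)%N)
  (CD : nat -> Type)
  (act : forall n, {perm 'I_n} -> CD n -> CD n)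
  (act1 : forall n (c : CD n), act n 1%g c = c)
  (actM : forall n (s t : {perm 'I_n}) (c : CD n), act n (s * t)%g c = act n t (act n s c))
  (H : forall n, CD n -> nmap R d n)
  (H_in_W : forall n (c : CD n), in_W (H n c))
  (H_span : forall n (t : RT n), exists s : seq (CD n * R),
              F t = fun f x => \sum_(q <- s) q.2 *: H n q.1 f x)
  (H_equiv : forall n (s : {perm 'I_n}) (c : CD n), H n (act n s c) = permact s (H n c))
  (p : forall n, RT n -> CD n)
  (p_surj : forall n (c : CD n), exists t : RT n, p n t = c)
  (p_equiv : forall n (s : {perm 'I_n}) (t t' : RT n),
              val t' = relabel s (val t) -> p n t' = act n s (p n t))
  (p_compat : forall n (t : RT n), F t = H n (p n t)) :
  forall n, bijective (p n).
Proof.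
move=> n.
pose i0 : 'I_d := Ordinal (ltnW hd).
pose i1 : 'I_d := Ordinal hd.
have hi : i0 != i1 by [].
have inj : injective (p n).
  move=> t t' hp.
  have EF : F (R := R) (d := d) t = F t' by rewrite !p_compat hp.
  apply/val_inj/eqP; rewrite finset.eqEsubset; apply/andP; split;
    apply/fintype.subsetP => -[u w] huw; apply/negPn/negP => hn.
    exact: (key hi huw hn EF).
  exact: (key hi huw hn (esym EF)).
exists (fun c => proj1_sig (cid (p_surj n c))).
  by move=> t; apply: inj; case: cid.
by move=> c; case: cid.
Qed.
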